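(* Let $\mathbb{F}$ be a field, let $A$ be a finite set equipped with a linear ordering $\preceq$, and let $k\ge 2$ be an integer. Let $f:A^k\to\mathbb{F}$ be a function such that $f(x_1,x_2,\ldots,x_k)\neq 0$ implies $x_1\preceq x_i\preceq x_k$ for all $i=1,2,\ldots,k$. Then the slice rank of $f$ is at least \[\bigl|\{x\in A: f(x,x,\ldots,x)\neq 0\}\bigr|.\]
   Context: A function $g:A^k\to\mathbb{F}$ is called a slice if it can be written as $g(x_1,\ldots,x_k)=h(x_i)\,g'(x_1,\ldots,x_{i-1},x_{i+1},\ldots,x_k)$ for some $1\le i\le k$ and some functions $h:A\to\mathbb{F}$ and $g':A^{k-1}\to\mathbb{F}$. The slice rank of a function $f:A^k\to\mathbb{F}$ is the minimum number $r$ such that $f$ can be written as a sum of $r$ slices. (For $k=2$ this is the usual matrix rank.) *)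

(* Defs.v *)
From HB Require Import structures.
From mathcomp Require Import all_boot all_order all_algebra.
Set Implicit Arguments. Unset Strict Implicit. Unset Printing Implicit Defensive.
Import Order.TTheory GRing.Theory.
Local Open Scope ring_scope.

(* x with its i-th coordinate removed: the point of A^(k-1)
   (x_1,...,x_{i-1},x_{i+1},...,x_k). The default i in insubd is never used
   since bump i j < k whenever j < k-1 and i < k. *)
Definition drop_coord (A : finType) (k : nat) (i : 'I_k)
    (x : {ffun 'I_k -> A}) : {ffun 'I_k.-1 -> A} :=
  [ffun j : 'I_k.-1 => x (insubd i (bump i j))].

Definition is_slice (F : fieldType) (A : finType) (k : nat)
    (g : {ffun 'I_k -> A} -> F) : Prop :=
  exists (i : 'I_k) (h : A -> F) (g' : {ffun 'I_k.-1 -> A} -> F),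
    forall x, g x = h (x i) * g' (drop_coord i x).

Definition slice_decomp (F : fieldType) (A : finType) (k : nat)
    (f : {ffun 'I_k -> A} -> F) (r : nat) : Prop :=
  exists gs : 'I_r -> ({ffun 'I_k -> A} -> F),
    (forall j, is_slice (gs j)) /\ (forall x, f x = \sum_(j < r) gs j x).

Definition slice_rank_ge (F : fieldType) (A : finType) (k : nat)
    (f : {ffun 'I_k -> A} -> F) (N : nat) : Prop :=
  forall r, slice_decomp f r -> (N <= r)%N.

(* Main.v *)
Require Import Defs.
From mathcomp Require Import all_boot all_order all_algebra.
From mathcomp Require Import zify ring.
From Stdlib Require Import IndefiniteDescription.
Set Implicit Arguments. Unset Strict Implicit. Unset Printing Implicit Defensive.
Import Order.TTheory GRing.Theory.
Local Open Scope ring_scope.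
Section K.
Variables (A : finType) (F : fieldType) (le : rel A).
Hypothesis le_tr : forall x y z, le x y -> le y z -> le x z.
Hypothesis le_an : forall x y, le x y -> le y x -> x = y.
Hypothesis le_to : forall x y, le x y || le y x.

Definition orth (hs : seq (A -> F)) (v : A -> F) : Prop :=
  forall h, List.In h hs -> \sum_b v b * h b = 0.

Definition goodP (hs : seq (A -> F)) (a : A) : Prop :=
  exists v : A -> F, v a = 1 /\ (forall b, v b != 0 -> le a b) /\ orth hs v.

Lemma le_rf x : le x x.
Proof. by have := le_to x x; rewrite orbb. Qed.

Lemma seq_max (s : seq A) : s != [::] -> exists2 m, m \in s & forall y, y \in s -> le y m.
Proof.
elim: s => // x s IH _.
case: (eqVneq s [::]) => [->|sn].
  by exists x; rewrite ?inE // => y; rewrite inE => /eqP->; apply: le_rf.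
have [m ms Hm] := IH sn.
case lxm: (le x m).
  exists m; first by rewrite inE ms orbT.
  by move=> y; rewrite inE => /orP[/eqP->|]; [|apply: Hm].
exists x; first by rewrite inE eqxx.
move=> y; rewrite inE => /orP[/eqP->|ys]; first exact: le_rf.
have := le_to x m; rewrite lxm /= => lmx.
exact: le_tr (Hm _ ys) lmx.
Qed.

Lemma K (hs : seq (A -> F)) :
  exists B : {set A}, (#|B| <= size hs)%N /\ forall a, a \notin B -> goodP hs a.
Proof.
elim: hs => [|h hs [B [cB gB]]].
  exists set0; split; first by rewrite cards0.
  move=> a _; exists (fun b => (b == a)%:R); split; first by rewrite eqxx.
  split=> // b; case: (eqVneq b a) => [-> _|]; first exact: le_rf.
  by rewrite /= mulr0n eqxx.
have Hw : forall a, exists v : A -> F, a \notin B ->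
   v a = 1 /\ (forall b, v b != 0 -> le a b) /\ orth hs v.
  move=> a; case: (boolP (a \in B)) => aB.
    by exists (fun _ => 0).
  by have [v Hv] := gB a aB; exists v.
pose w a := proj1_sig (constructive_indefinite_description _ (Hw a)).
have Pw : forall a, a \notin B -> w a a = 1 /\ (forall b, w a b != 0 -> le a b) /\ orth hs (w a).
  by move=> a; exact: (proj2_sig (constructive_indefinite_description _ (Hw a))).
pose ip (v : A -> F) := \sum_b v b * h b.
pose C := [set a | (a \notin B) && (ip (w a) != 0)].
have orthC : forall a, a \notin B -> ip (w a) = 0 -> goodP (h :: hs) a.
  move=> a aB ip0; have [H1 [H2 H3]] := Pw a aB.
  exists (w a); split=> //; split=> // h' /= [<-|]; first by [].
  exact: H3.
case: (set_0Vmem C) => [C0|[x xC]].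
  exists B; split; first by apply: leqW.
  move=> a aB; apply: orthC => //.
  apply/eqP; apply/negPn/negP => nz.
  have : a \in C by rewrite inE aB nz.
  by rewrite C0 inE.
have [a0 a0C Ha0] : exists2 m, m \in enum C & forall y, y \in enum C -> le y m.
  by apply: seq_max; apply/eqP => E; have := mem_enum C x; rewrite E xC.
rewrite mem_enum inE in a0C; case/andP: a0C => a0B ip0.
exists (a0 |: B); split.
  by rewrite cardsU1 a0B /= add1n ltnS.
move=> a; rewrite inE negb_or => /andP[aa0 aB].
case: (eqVneq (ip (w a)) 0) => [/orthC|ipa]; first exact.
have lea : le a a0 by apply: Ha0; rewrite mem_enum inE aB ipa.
have nle : ~~ le a0 a.
  by apply/negP => l; move: aa0; rewrite (le_an lea l) inE eqxx.
have [wa1 [wa2 wa3]] := Pw a aB.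
have [w01 [w02 w03]] := Pw a0 a0B.
have w0a : w a0 a = 0.
  by apply/eqP; apply/negPn/negP => /w02; rewrite (negbTE nle).
pose c := ip (w a) / ip (w a0).
have sumE : forall h', \sum_b (w a b - c * w a0 b) * h' b =
     \sum_b w a b * h' b - c * \sum_b w a0 b * h' b.
  move=> h'; rewrite mulr_sumr -sumrB; apply: eq_bigr => b _; ring.
exists (fun b => w a b - c * w a0 b); split.
  by rewrite w0a mulr0 subr0.
split.
  move=> b; case: (eqVneq (w a b) 0) => [->|/wa2 //].
  case: (eqVneq (w a0 b) 0) => [->|/w02 l0 _]; first by rewrite mulr0 subr0 eqxx.
  exact: le_tr lea l0.
move=> h' /= [<-|hin].
  rewrite sumE -/(ip (w a)) -/(ip (w a0)) /c divfK //.
  by rewrite subrr.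
by rewrite sumE wa3 // w03 // mulr0 subr0.
Qed.
End K.
Lemma insubd_bump_neq k (i : 'I_k) (j : 'I_k.-1) : insubd i (bump i j) != i.
Proof.
rewrite -val_eqE val_insubd.
case: ifP => [_|]; first by rewrite eq_sym neq_bump.
have := ltn_ord j; have := ltn_ord i; rewrite /bump; case: leqP => _ /= ? ? /negP []; lia.
Qed.

Lemma sum_coord_indep (A : finType) (F : fieldType) k (i : 'I_k)
    (G : {ffun 'I_k -> A} -> F) (c c' : A) :
  (forall x y : {ffun 'I_k -> A}, (forall l, l != i -> x l = y l) -> G x = G y) ->
  \sum_(x : {ffun 'I_k -> A} | x i == c) G x = \sum_(x : {ffun 'I_k -> A} | x i == c') G x.
Proof.
move=> HG.
pose sw (y : A) := if y == c then c' else if y == c' then c else y.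
have swK : involutive sw.
  move=> y; rewrite /sw.
  have [->|yc] := eqVneq y c.
    rewrite eqxx; have [->|c'c] := eqVneq c' c; first by rewrite ?eqxx.
    by [].
  have [->|yc'] := eqVneq y c'.
    by rewrite ?eqxx.
  by rewrite (negbTE yc) (negbTE yc').
pose sg (x : {ffun 'I_k -> A}) := [ffun l => if l == i then sw (x l) else x l].
have sgK : involutive sg.
  move=> x; apply/ffunP => l; rewrite !ffunE; case: eqP => // _; exact: swK.
rewrite (reindex_inj (inv_inj sgK)) /=.
apply: eq_big => [x|x _].
  rewrite /sg ffunE eqxx /sw.
  case: (eqVneq (x i) c) => [->|xc]; first by rewrite eq_sym.
  rewrite ?(negbTE xc).
  have [E|ne] := eqVneq (x i) c'; first by rewrite ?E ?eqxx.
  by rewrite ?(negbTE ne) ?(negbTE xc).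

apply: HG => l li; rewrite /sg ffunE (negbTE li) //.
Qed.

Lemma slice_contract (A : finType) (F : fieldType) k (i : 'I_k)
    (v : 'I_k -> A -> F) (h : A -> F) (g : {ffun 'I_k.-1 -> A} -> F) (a : A) :
  \sum_c v i c * h c = 0 ->
  \sum_(x : {ffun 'I_k -> A}) (\prod_l v l (x l)) * (h (x i) * g (drop_coord i x)) = 0.
Proof.
move=> H0.
pose G (x : {ffun 'I_k -> A}) := (\prod_(l | l != i) v l (x l)) * g (drop_coord i x).
have GI : forall x y : {ffun 'I_k -> A}, (forall l, l != i -> x l = y l) -> G x = G y.
  move=> x y Hxy; rewrite /G; congr (_ * _).
    by apply: eq_bigr => l /Hxy ->.
  congr g; apply/ffunP => j; rewrite !ffunE; apply: Hxy; exact: insubd_bump_neq.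
transitivity (\sum_(x : {ffun 'I_k -> A}) (v i (x i) * h (x i)) * G x).
  apply: eq_bigr => x _; rewrite (bigD1 i) //= /G; ring.
rewrite (partition_big (fun x : {ffun 'I_k -> A} => x i) predT) //=.
transitivity (\sum_(c : A) (v i c * h c) * \sum_(x : {ffun 'I_k -> A} | x i == a) G x).
  apply: eq_bigr => c _; rewrite -(sum_coord_indep c a GI) mulr_sumr.
  by apply: eq_big => [x|x /eqP ->].

by rewrite -mulr_suml H0 mul0r.
Qed.
Lemma card_bigcup_le (T I : finType) (B : I -> {set T}) :
  (#|\bigcup_i B i| <= \sum_i #|B i|)%N.
Proof.
elim/big_rec2: _ => [|i U n _ IH]; first by rewrite cards0.
exact: leq_trans (leq_card_setU _ _).1 (leq_add (leqnn _) IH).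
Qed.

Lemma sum_count_eq (T : Type) k (p : T -> 'I_k) (s : seq T) :
  (\sum_(i < k) count (fun j => p j == i) s)%N = size s.
Proof.
elim: s => [|x s IH] /=; first by rewrite big1.
rewrite big_split /= IH (bigD1 (p x)) //= eqxx big1 // => i.
by rewrite eq_sym => /negbTE ->.
Qed.

Lemma in_map_In (T : eqType) U (f : T -> U) (s : seq T) x :
  x \in s -> List.In (f x) (map f s).
Proof.
elim: s => // y s IH; rewrite inE => /orP[/eqP->|/IH]; [by left|by right].
Qed.

Theorem lemma2 (F : fieldType) (d : Order.disp_t) (A : finOrderType d)
    (k : nat) (hk : (2 <= k)%N) (f : {ffun 'I_k -> A} -> F) :
  (forall (x : {ffun 'I_k -> A}) (i ifirst ilast : 'I_k),
     val ifirst = 0%N -> val ilast = k.-1 -> f x != 0 ->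
     (x ifirst <= x i <= x ilast)%O) ->
  slice_rank_ge f #|[set a : A | f [ffun _ => a] != 0]|.
Proof.
move=> tri r [gs [Hsl Hf]].
have Hsl' j : exists t : 'I_k * (A -> F) * ({ffun 'I_k.-1 -> A} -> F),
    forall x, gs j x = t.1.2 (x t.1.1) * t.2 (drop_coord t.1.1 x).
  by have [i [h [g' H]]] := Hsl j; exists (i, h, g').
pose t j := sval (constructive_indefinite_description _ (Hsl' j)).
have Hg : forall j x, gs j x = (t j).1.2 (x (t j).1.1) * (t j).2 (drop_coord (t j).1.1 x).
  by move=> j; exact: (svalP (constructive_indefinite_description _ (Hsl' j))).
pose ic j := (t j).1.1; pose hh j := (t j).1.2; pose gg j := (t j).2.
pose hs (i : 'I_k) := [seq hh j | j <- enum 'I_r & ic j == i].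
pose le_i (i : 'I_k) : rel A := fun a b => if val i == k.-1 then (b <= a)%O else (a <= b)%O.
have Kc i : exists B : {set A}, (#|B| <= size (hs i))%N /\
    forall a, a \notin B -> goodP (le_i i) (hs i) a.
  apply: K; rewrite /le_i; case: (val i == k.-1).
  - by move=> x y z h1 h2; exact: le_trans h2 h1.
  - by move=> x y z h1 h2; exact: le_trans h1 h2.
  - by move=> x y h1 h2; apply: le_anti; rewrite h1 h2.
  - by move=> x y h1 h2; apply: le_anti; rewrite h1 h2.
  - by move=> x y; rewrite orbC le_total.
  - by move=> x y; rewrite le_total.
pose Bs i := sval (constructive_indefinite_description _ (Kc i)).
have HB i := svalP (constructive_indefinite_description _ (Kc i)).
have cardU : (#|\bigcup_(i < k) Bs i| <= r)%N.
  apply: leq_trans (card_bigcup_le _) _.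
  apply: leq_trans (_ : (\sum_(i < k) size (hs i) <= r)%N).
    by apply: leq_sum => i _; case: (HB i).
  rewrite (eq_bigr (fun i => count (fun j => ic j == i) (enum 'I_r))).
    by rewrite sum_count_eq size_enum_ord.
  by move=> i _; rewrite size_map size_filter.
case: (leqP #|[set a : A | f [ffun _ => a] != 0]| r) => // ltr.
have : ~~ ([set a : A | f [ffun _ => a] != 0] \subset \bigcup_(i < k) Bs i).
  apply/negP => sub; have := subset_leq_card sub.
  by move=> h; have := leq_ltn_trans (leq_trans h cardU) ltr; rewrite ltnn.
case/subsetPn => a aS aU.
rewrite inE in aS.
have good i : exists v : A -> F, v a = 1 /\ (forall b, v b != 0 -> le_i i a b) /\ orth (hs i) v.
  case: (HB i) => _; apply; apply/negP => aB; move/negP: aU; apply.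
  by apply/bigcupP; exists i.
pose v i := sval (constructive_indefinite_description _ (good i)).
have Hv i := svalP (constructive_indefinite_description _ (good i)).
have T0 : \sum_(x : {ffun 'I_k -> A}) (\prod_l v l (x l)) * f x = 0.
  under eq_bigr => x _ do rewrite Hf mulr_sumr.
  rewrite exchange_big big1 // => j _.
  rewrite (eq_bigr (fun x : {ffun 'I_k -> A} => (\prod_l v l (x l)) * (hh j (x (ic j)) * gg j (drop_coord (ic j) x)))); last first.
    by move=> x _; rewrite Hg.
  apply: (@slice_contract _ _ _ (ic j) v (hh j) (gg j) a).
  have [_ [_ Ho]] := Hv (ic j); apply: Ho.
  by apply: in_map_In; rewrite mem_filter eqxx mem_enum.
have k0 : (0 < k)%N by apply: leq_trans hk.
have kL : (k.-1 < k)%N by rewrite prednK.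
pose i0 : 'I_k := Ordinal k0.
pose iL : 'I_k := Ordinal kL.
have T1 : \sum_(x : {ffun 'I_k -> A}) (\prod_l v l (x l)) * f x = f [ffun _ => a].
  rewrite (bigD1 [ffun _ => a]) //= [X in _ + X]big1; last first.
    move=> x xne.
  have [l /eqP vl0 | Hall] := pickP (fun l => v l (x l) == 0).
    by rewrite (bigD1 l) //= vl0 !mul0r.
  case: (eqVneq (f x) 0) => [->|fx]; first by rewrite mulr0.
  exfalso; move/negP: xne; apply; apply/eqP.
  have s0 : (a <= x i0)%O.
    have [_ [H _]] := Hv i0; have L : le_i i0 a (x i0) by apply: H; rewrite Hall.
    move: L; rewrite /le_i /=.
    have -> : (0 == k.-1)%N = false by apply/negbTE/eqP; lia.
    by [].
  have sL : (x iL <= a)%O.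
    have [_ [H _]] := Hv iL; have L : le_i iL a (x iL) by apply: H; rewrite Hall.
    by move: L; rewrite /le_i /= eqxx.
  apply/ffunP => l; rewrite ffunE.
  have /andP[h1 h2] := tri x l i0 iL erefl erefl fx.
  apply: le_anti; rewrite (le_trans h2 sL) /=.
  exact: le_trans s0 h1.
  rewrite addr0 big1 ?mul1r // => l _; rewrite ffunE; by case: (Hv l).
by move: aS; rewrite -T1 T0 eqxx.
Qed.
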